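(* Let $q\equiv 1\pmod 4$ be a prime power and let $n\ge 2$, $k\ge 0$ be integers. If $SP_q$ has property $P(n-1,k)$, then $Tr(SP_q)$ has property $P(n,k)$.
   Context: A signified graph is a simple graph with each edge labelled positive or negative. A signed vector of size $k$ is an element $\alpha=(\alpha_1,\dots,\alpha_k)\in\{+1,-1\}^k$. Given a sequence $X=(v_1,\dots,v_k)$ of $k$ distinct pairwise adjacent vertices, a vertex $u$ is an $\alpha$-successor of $X$ if for each $i$, $uv_i$ is an edge of sign $\alpha_i$; $S^\alpha(X)$ is the set of $\alpha$-successors. A signified graph has property $P(k,l)$ if $|S^\alpha(X)|\ge l$ for every sequence $X$ of $k$ distinct pairwise adjacent vertices and every signed vector $\alpha$ of size $k$. For $x\in\mathbb{F}_q^*$ let $\mathrm{sq}(x)=+1$ if $x$ is a square and $-1$ otherwise. $SP_q$ is the complete graph on $\mathbb{F}_q$ where $xy$ is negative iff $\mathrm{sq}(y-x)=-1$. $Tr(SP_q)$ has vertex set $\{u_i : u\in\mathbb{F}_q\cup\{\infty\},\ i\in\{0,1\}\}$; for $u\ne v$ in $\mathbb{F}_q$, $u_iv_j$ is an edge of sign $\mathrm{sq}(u-v)(-1)^{i+j}$; for $v\in\mathbb{F}_q$, $\infty_iv_j$ is an edge of sign $(-1)^{i+j}$; no other edges. *)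

(* Defs.v *)
From HB Require Import structures.
From mathcomp Require Import all_boot all_order all_algebra all_field.
Set Implicit Arguments. Unset Strict Implicit. Unset Printing Implicit Defensive.
Import GRing.Theory.
Local Open Scope ring_scope.

(* A signified graph on a finite vertex type T is encoded by
   sg : T -> T -> option bool :
     sg x y = None        : x and y are not adjacent
     sg x y = Some true   : xy is a positive edge
     sg x y = Some false  : xy is a negative edge.
   Signs +1 / -1 are encoded as true / false. *)
Definition signified_graph (T : finType) (sg : T -> T -> option bool) : Prop :=
  (forall x, sg x x = None) /\ (forall x y, sg x y = sg y x).

Definition successor (T : finType) (sg : T -> T -> option bool) (k : nat)
    (X : k.-tuple T) (alpha : k.-tuple bool) (u : T) : bool :=
  [forall i : 'I_k, sg u (tnth X i) == Some (tnth alpha i)].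

Definition successors (T : finType) (sg : T -> T -> option bool) (k : nat)
    (X : k.-tuple T) (alpha : k.-tuple bool) : {set T} :=
  [set u | successor sg X alpha u].

Definition clique_seq (T : finType) (sg : T -> T -> option bool) (k : nat)
    (X : k.-tuple T) : Prop :=
  uniq X /\ (forall i j : 'I_k, i != j -> sg (tnth X i) (tnth X j) != None).

Definition propP (T : finType) (sg : T -> T -> option bool) (k l : nat) : Prop :=
  forall (X : k.-tuple T) (alpha : k.-tuple bool),
    clique_seq sg X -> (l <= #|successors sg X alpha|)%N.

Definition sq (F : finFieldType) (x : F) : bool := [exists y : F, y * y == x].

Definition SP (F : finFieldType) (x y : F) : option bool :=
  if x == y then None else Some (sq (y - x)).

(* Tr(SP_q): vertices u_i with u in F ∪ {∞} (None = ∞) and i in {0,1}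
   (encoded by bool, false = 0, true = 1).  (-1)^(i+j) = +1 iff i == j. *)
Definition TrSP (F : finFieldType) (a b : option F * bool) : option bool :=
  match a, b with
  | (Some u, i), (Some v, j) =>
      if u == v then None else Some (sq (u - v) == (i == j))
  | (None, i), (Some _, j) => Some (i == j)
  | (Some _, i), (None, j) => Some (i == j)
  | (None, _), (None, _) => None
  end.

(* Main.v *)
Require Import Defs.
From HB Require Import structures.
From mathcomp Require Import all_boot all_order all_algebra all_field.
From mathcomp Require Import all_fingroup all_solvable.
From mathcomp Require Import zify ring.
Set Implicit Arguments. Unset Strict Implicit. Unset Printing Implicit Defensive.
Import GRing.Theory.
Local Open Scope ring_scope.

Section Sq.
Variable F : finFieldType.

Lemma unit_pow (x : F) : x != 0 -> x ^+ #|F|.-1 = 1.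
Proof.
move=> x0; have := expf_card x.
have hc : (0 < #|F|)%N by apply/card_gt0P; exists 0.
rewrite -(prednK hc) exprS => h.
by apply: (mulIf x0); rewrite mul1r mulrC.
Qed.

Lemma prim_exists : exists g : F, (#|F|.-1).-primitive_root g.
Proof.
have hc : (1 < #|F|)%N by apply: finNzRing_gt1.
have h : has (#|F|.-1).-primitive_root (enum (predC1 (0:F))).
  apply: has_prim_root.
  - by rewrite -ltnS prednK // ltnW.
  - apply/allP => x; rewrite mem_enum /= => x0; rewrite unity_rootE unit_pow //.
  - exact: enum_uniq.
  - by rewrite -cardE cardC1.
by case/hasP: h => g _ hg; exists g.
Qed.
Variable hq : (#|F| %% 4 = 1)%N.
Let N := #|F|.-1.
Lemma N4 : (4 %| N)%N.
Proof.
have hc : (0 < #|F|)%N by apply/card_gt0P; exists 0.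
rewrite /N; move: hq; rewrite -(prednK hc) => h.
lia.
Qed.

Variable g : F.
Hypothesis hg : N.-primitive_root g.

Lemma N_gt0 : (0 < N)%N.
Proof. exact: prim_order_gt0 hg. Qed.

Lemma g_nz : g != 0.
Proof. by rewrite (prim_root_eq0 hg) -lt0n N_gt0. Qed.

Lemma sq_exp a : sq (g ^+ a) = ~~ odd a.
Proof.
apply/idP/idP.
- case/existsP => y /eqP hy.
  have y0 : y != 0.
    apply/eqP => y0; move: hy; rewrite y0 mul0r => /esym/eqP.
    by rewrite expf_eq0 (negbTE g_nz) andbF.
  have [i hi] := prim_rootP hg (unit_pow y0).
  move: hy; rewrite hi -exprD => /eqP; rewrite (eq_prim_root_expr hg) => /eqP h.
  have : ((i + i) %% 2 = a %% 2)%N.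
    have d2 : (2 %| N)%N by apply: dvdn_trans N4.
    by rewrite -(modn_dvdm _ d2) h (modn_dvdm _ d2).
  by rewrite !modn2 addnn odd_double; case: (odd a).
- move=> ha; apply/existsP; exists (g ^+ a./2); apply/eqP.
  by rewrite -exprD addnn -[in RHS](odd_double_half a) (negbTE ha) add0n.
Qed.

Lemma sq_rep (x : F) : x != 0 -> exists a, x = g ^+ a.
Proof. by move=> x0; have [i ->] := prim_rootP hg (unit_pow x0); exists i. Qed.

Lemma sqM (x y : F) : x != 0 -> y != 0 -> sq (x * y) = (sq x == sq y).
Proof.
move=> /sq_rep[a ->] /sq_rep[b ->]; rewrite -exprD !sq_exp oddD.
by case: (odd a); case: (odd b).
Qed.

Lemma sq1 : sq (1 : F).
Proof. by apply/existsP; exists 1; rewrite mulr1. Qed.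

Lemma sqV (x : F) : sq x^-1 = sq x.
Proof.
have [->|x0] := eqVneq x 0; first by rewrite invr0.
have := sqM x0 (invr_neq0 x0); rewrite divff // sq1.
by case: (sq x); case: (sq x^-1).
Qed.

Lemma sqN1 : sq (-1 : F).
Proof.
have hN := N_gt0.
have eN : N = (N./2).*2.
  have : ~~ odd N by rewrite -dvdn2; apply: dvdn_trans N4.
  by move=> hodd; rewrite -[in LHS](odd_double_half N) (negbTE hodd).
have h2 : (g ^+ N./2) ^+ 2 = 1.
  by rewrite -exprM muln2 -eN (prim_expr_order hg).
have hn1 : g ^+ N./2 != 1.
  rewrite -(prim_order_dvd hg); apply/negP => /dvdn_leq.
  have eN' : N = (N./2 + N./2)%N by rewrite addnn.
  move: eN' hN; rewrite /N; move: (#|F|.-1./2) => h eN' hN.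
  rewrite eN'; lia.
have : (g ^+ N./2 - 1) * (g ^+ N./2 + 1) = 0.
  by rewrite mulrDr mulr1 mulrBl mul1r -expr2 h2 addrA subrK subrr.
move/eqP; rewrite mulf_eq0 subr_eq0 (negbTE hn1) /= addr_eq0 => /eqP <-.
rewrite sq_exp -dvdn2.
case/dvdnP: N4 => c hc.
rewrite hc.
have -> : (c * 4)%N = (c*2).*2 by rewrite -muln2 -mulnA.
by rewrite doubleK dvdn_mull.
Qed.

Lemma sqN (x : F) : sq (- x) = sq x.
Proof.
have [->|x0] := eqVneq x 0; first by rewrite oppr0.
by rewrite -mulN1r sqM ?oppr_eq0 ?oner_eq0 // sqN1.
Qed.

Lemma sqB (x y : F) : sq (x - y) = sq (y - x).
Proof. by rewrite -opprB sqN. Qed.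
End Sq.
Arguments sq : simpl never.
Section Graph.
Variable F : finFieldType.
Hypothesis sqB : forall x y : F, sq (x - y) = sq (y - x).
Hypothesis sqM : forall x y : F, x != 0 -> y != 0 -> sq (x * y) = (sq x == sq y).
Hypothesis sqV : forall x : F, sq x^-1 = sq x.

Definition sig (a : F) (u : option F * bool) : option F * bool :=
 match u with
 | (None, i) => (Some 0, i)
 | (Some x, i) => if x == a then (None, i)
                  else (Some (x - a)^-1, if sq (x - a) then i else ~~ i)
 end.

Lemma sq0N (w : F) : sq (0 - w) = sq w.
Proof. by rewrite sqB subr0. Qed.

Lemma sig_pres a u v : TrSP (sig a u) (sig a v) = TrSP u v.
Proof.
case: u => [[x|] i]; case: v => [[y|] j] /=.
- have [hxa|xa] := eqVneq x a; have [hya|ya] := eqVneq y a; try subst x; try subst y => /=.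
  + by rewrite eqxx.
  + rewrite eq_sym (negbTE ya) sqB; congr Some.
    by case: (sq _); case: i; case: j.
  + rewrite (negbTE xa); congr Some.
    by case: (sq _); case: i; case: j.
  + have xa0 : x - a != 0 by rewrite subr_eq0.
    have ya0 : y - a != 0 by rewrite subr_eq0.
    rewrite /= (inj_eq invr_inj) (can_eq (subrK a)).
    have [hxy|xy] := eqVneq x y; first by subst x.
    have yx0 : y - x != 0 by rewrite subr_eq0 eq_sym.
    have -> : (x - a)^-1 - (y - a)^-1 = (y - x) * ((x - a)^-1 * (y - a)^-1).
      by field; rewrite xa0 ya0.
    rewrite sqM // ?mulf_neq0 ?invr_neq0 // sqM ?invr_neq0 // !sqV (sqB y x).
    congr Some.
    by case: (sq (x - y)); case: (sq (x - a)); case: (sq (y - a)); case: i; case: j.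
- have [hxa|xa] := eqVneq x a; first by subst x.
  rewrite /= invr_eq0 subr_eq0 (negbTE xa) subr0 sqV; congr Some.
  by case: (sq _); case: i; case: j.
- have [hya|ya] := eqVneq y a; first by subst y.
  rewrite /= eq_sym invr_eq0 subr_eq0 (negbTE ya) sq0N sqV; congr Some.
  by case: (sq _); case: i; case: j.
- by rewrite /= eqxx.
Qed.

Lemma sig_inj a : injective (sig a).
Proof.
move=> [[x|] i] [[y|] j]; rewrite /sig.
- case: eqP => hx; case: eqP => hy //.
  + by case=> ->; rewrite hx hy.
  + case=> /invr_inj h.
    have exy : x = y by rewrite -(subrK a x) h subrK.
    subst y; case: (sq _) => [->|/negb_inj ->] //.
- case: eqP => // hx [/eqP]; rewrite invr_eq0 subr_eq0 => /eqP.
  by move=> /hx.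
- case: eqP => // hy [/esym/eqP]; rewrite invr_eq0 subr_eq0 => /eqP.
  by move=> /hy.
- by case=> ->.
Qed.

Lemma case1 (m k : nat) (hSP : propP (@SP F) m k)
  (X : m.+1.-tuple (option F * bool)) (al : m.+1.-tuple bool)
  (hX : clique_seq (@TrSP F) X) (h0 : (tnth X ord0).1 = None) :
  (k <= #|successors (@TrSP F) X al|)%N.
Proof.
case: hX => _ hadj.
case E0 : (tnth X ord0) h0 => [o0 i0] /= ho; subst o0.
pose Xl t := tnth X (lift ord0 t).
have adj t : exists y b, Xl t = (Some y, b).
  have := hadj ord0 (lift ord0 t) (neq_lift _ _).
  rewrite E0 -/(Xl t); case: (Xl t) => [[y|] b] //= _; by exists y, b.
pose pt (v : option F * bool) := odflt 0 v.1.
have dist t t' : t != t' -> pt (Xl t) != pt (Xl t').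
  move=> tt; have := hadj (lift ord0 t) (lift ord0 t').
  rewrite (inj_eq (@lift_inj _ ord0)) => /(_ tt).
  rewrite -/(Xl t) -/(Xl t').
  have [y [b ->]] := adj t; have [y' [b' ->]] := adj t' => /=.
  rewrite /pt /=; by have [e|//] := eqVneq y y'; move=> /eqP.
pose Y := [tuple pt (Xl t) | t < m].
pose j := if tnth al ord0 then i0 else ~~ i0.
pose al' := [tuple (tnth al (lift ord0 t) == (j == (Xl t).2)) | t < m].
have hY : clique_seq (@SP F) Y.
  split.
  - apply/tuple_uniqP => t t'; rewrite !tnth_mktuple => e.
    have [//|tt] := eqVneq t t'; by move: (dist t t' tt); rewrite e eqxx.
  - move=> t t' tt; rewrite !tnth_mktuple /SP.
    by rewrite (negbTE (dist t t' tt)).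
have hk := hSP Y al' hY.
pose gf (w : F) := (Some w, j).
have ginj : injective gf by move=> w w' [->].
apply: (leq_trans hk); rewrite -(card_imset _ ginj); apply: subset_leq_card.
apply/subsetP => _ /imsetP [w hw ->]; rewrite inE.
move: hw; rewrite inE => /forallP hw.
apply/forallP => i; case: (unliftP ord0 i) => [t ->|->].
- rewrite -/(Xl t); have := hw t; rewrite !tnth_mktuple.
  have [y [b ->]] := adj t; rewrite /SP /= /gf /=.
  rewrite /pt /=; case: (w =P y) => // _ /eqP [] e; rewrite sqB e.
  by case: (j); case: (b); case: (tnth al (lift ord0 t)).
- rewrite E0 /gf /= /j.
  by case: (tnth al ord0); case: (i0).
Qed.
End Graph.

Local Close Scope ring_scope.

Theorem mainTheorem8 (F : finFieldType) (n k : nat) :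
  #|F| %% 4 = 1 -> 2 <= n ->
  propP (@SP F) n.-1 k -> propP (@TrSP F) n k.
Proof.
move=> hq hn hSP.
have [g hg] := prim_exists F.
have sB := sqB hq hg; have sM := sqM hq hg; have sV := sqV hq hg.
case: n hn hSP => [|m] // hn /= hSP X al hX.
case E: (tnth X ord0) => [[a|] i].
- pose X' := map_tuple (sig a) X.
  have hX' : clique_seq (@TrSP F) X'.
    case: hX => hu hadj; split.
    + by rewrite map_inj_uniq //; apply: sig_inj.
    + by move=> i1 i2 hi; rewrite !tnth_map sig_pres //; apply: hadj.
  have h0 : (tnth X' ord0).1 = None by rewrite tnth_map E /= eqxx.
  have := case1 sB hSP al hX' h0.
  have -> : successors (@TrSP F) X al = sig a @^-1: successors (@TrSP F) X' al.
    apply/setP => u; rewrite !inE; apply: eq_forallb => i1.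
    by rewrite tnth_map sig_pres.
  by rewrite card_preimset //; apply: sig_inj.
- by apply: (case1 sB hSP al hX); rewrite E.
Qed.
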